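(* Let $d,N\ge1$, let $L>C_{\mathcal U}$, and let $\Lambda_L^{(N)}(\mathbf x)$ and $\Lambda_L^{(N)}(\mathbf y)$ be two fully interactive $N$-particle cubes. If $d_S(\mathbf x,\mathbf y)\ge 8NL$, then $\Pi\Lambda_L^{(N)}(\mathbf x)$ and $\Pi\Lambda_L^{(N)}(\mathbf y)$ are disjoint subsets of $\mathbb Z^d$.
   Context: Points of $\mathbb Z^{Nd}$ are $\mathbf x=(x_1,\dots,x_N)$, $x_j\in\mathbb Z^d$; $d_S(\mathbf x,\mathbf y)=\min_{\pi\in S_N}\|\mathbf x-\pi\mathbf y\|_\infty$ with $\pi\mathbf y=(y_{\pi(1)},\dots,y_{\pi(N)})$; $\Lambda_L^{(N)}(\mathbf a)=\{\mathbf z\in\mathbb Z^{Nd}:d_S(\mathbf z,\mathbf a)\le L\}$. For $\Theta\subseteq\mathbb Z^{Nd}$, $\Pi\Theta=\bigcup_{n=1}^N\{z_n:\mathbf z\in\Theta\}\subseteq\mathbb Z^d$. Let $\mathcal U:\mathbb Z^d\to\mathbb R$ be a finitely supported interaction and $C_{\mathcal U}=\max_{u\in\operatorname{supp}\mathcal U}\|u\|+1$. A cube $\Lambda_L^{(N)}(\mathbf x)$ is partially interactive if there exist $1\le N_1,N_2<N$ with $N_1+N_2=N$ and disjoint $\mathcal S_1,\mathcal S_2\subseteq\mathbb Z^d$ with $\operatorname{dist}(\mathcal S_1,\mathcal S_2)\ge C_{\mathcal U}$ such that for all $\mathbf z\in\Lambda_L^{(N)}(\mathbf x)$: $\#\{j:z_j\in\mathcal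 S_1\}=N_1$ and $\#\{j:z_j\in\mathcal S_2\}=N_2$. It is fully interactive if it is not partially interactive. *)

(* Defs.v *)
From mathcomp Require Import all_boot all_order all_algebra all_fingroup.
Set Implicit Arguments. Unset Strict Implicit. Unset Printing Implicit Defensive.
Import Order.TTheory GRing.Theory Num.Theory.

Definition pt (d : nat) := {ffun 'I_d -> int}.
Definition cfg (N d : nat) := {ffun 'I_N -> pt d}.

Definition dist1 d (u v : pt d) : nat := \max_(k < d) absz (u k - v k).
Definition norm1 d (u : pt d) : nat := \max_(k < d) absz (u k).

Definition distinf N d (x y : cfg N d) : nat := \max_(j < N) dist1 (x j) (y j).

Definition permcfg N d (p : 'S_N) (y : cfg N d) : cfg N d := [ffun j => y (p j)].

(* symmetrized distance d_S(x,y) = min_pi ||x - pi y||_oo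
   (minimum over the nonempty finite set S_N; the seed is the value at pi = id) *)
Definition dS N d (x y : cfg N d) : nat :=
  \big[minn/distinf x y]_(p : 'S_N) distinf x (permcfg p y).

Definition cube (R : realFieldType) N d (L : R) (a : cfg N d) (z : cfg N d) : Prop :=
  ((dS z a)%:R <= L)%R.

Definition Pi N d (Theta : cfg N d -> Prop) (u : pt d) : Prop :=
  exists z, Theta z /\ exists n : 'I_N, z n = u.

(* C_U = max_{u in supp U} ||u|| + 1, where s enumerates supp U *)
Definition C_U d (s : seq (pt d)) : nat := (\max_(u <- s) norm1 u).+1.

Definition partially_interactive (R : realFieldType) N d (C : nat) (L : R)
  (x : cfg N d) : Prop :=
  exists N1 N2 : nat,
    [/\ 1 <= N1 < N, 1 <= N2 < N & N1 + N2 = N] /\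
    exists S1 S2 : pred (pt d),
      [/\ (forall u, ~~ (S1 u && S2 u)),
          (forall u v, S1 u -> S2 v -> C <= dist1 u v) &
          (forall z, cube L x z ->
             #|[set j : 'I_N | S1 (z j)]| = N1 /\ #|[set j : 'I_N | S2 (z j)]| = N2)].

Definition fully_interactive (R : realFieldType) N d (C : nat) (L : R)
  (x : cfg N d) : Prop := ~ partially_interactive C L x.

(* Main.v *)
Require Import Defs.
From mathcomp Require Import all_boot all_order all_algebra all_fingroup.
From mathcomp Require Import ring lra zify.
Import Order.TTheory GRing.Theory Num.Theory.

Lemma dist1C d (u v : pt d) : dist1 u v = dist1 v u.
Proof. by apply: eq_bigr => k _; rewrite -abszN opprB. Qed.

Lemma absz_tri (a b c : int) : (absz (a - c)%R <= absz (a - b)%R + absz (b - c)%R)%N.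
Proof. rewrite -lez_nat PoszD !abszE. exact: ler_distD. Qed.

Lemma dist1_tri d (u v w : pt d) : (dist1 u w <= dist1 u v + dist1 v w)%N.
Proof.
apply/bigmax_leqP => k _.
apply: leq_trans (absz_tri (u k) (v k) (w k)) _.
by apply: leq_add; rewrite /dist1; apply: (leq_bigmax (F := fun k => _)) .
Qed.

Lemma dist1_triR (R : realFieldType) d (u v w : pt d) :
  ((dist1 u w)%:R <= (dist1 u v)%:R + (dist1 v w)%:R :> R)%R.
Proof. by rewrite -natrD ler_nat dist1_tri. Qed.

Lemma bigmaxR (R : realFieldType) (I : finType) (F : I -> nat) (B : R) :
  (0 <= B)%R -> (forall i, ((F i)%:R <= B)%R) -> (((\max_i F i)%:R) <= B)%R.
Proof.
move=> B0 HF; apply: (big_ind (fun v : nat => (v%:R <= B)%R)) => //.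
by move=> a b Ha Hb; case: (leqP a b).
Qed.

Lemma dS_le N d (x y : cfg N d) : (dS x y <= distinf x y)%N.
Proof.
apply: (big_rec (fun v => v <= distinf x y)%N) => // i v _ Hv.
exact: leq_trans (geq_minr _ v) Hv.
Qed.

Lemma dS_attained N d (x y : cfg N d) :
  exists p : 'S_N, dS x y = distinf x (permcfg p y).
Proof.
rewrite /dS; apply: (big_ind (fun v => exists p : 'S_N, v = distinf x (permcfg p y))).
- exists 1%g; congr distinf; apply/ffunP => j; by rewrite ffunE perm1.
- move=> a b [p ->] [q ->]; rewrite /minn; case: ifP => _; [by exists p | by exists q].
- by move=> p _; exists p.
Qed.

Lemma cube_perm (R : realFieldType) N d (L : R) (x z : cfg N d) :
  cube L x z -> exists p : 'S_N, forall j, ((dist1 (z j) (x (p j)))%:R <= L)%R.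
Proof.
rewrite /cube; case: (dS_attained _ _ z x) => p ->  H; exists p => j.
apply: le_trans H; rewrite ler_nat.
have := @leq_bigmax _ (fun j => dist1 (z j) ((permcfg p x) j)) j.
by rewrite /permcfg ffunE.
Qed.

Lemma split_lemma (R : realFieldType) N d (C : nat) (L : R) (x : cfg N d) (A : {set 'I_N}) :
  (0 < C)%N -> A != set0 -> A != setT ->
  (forall i j, i \in A -> j \notin A -> (2 * L + C%:R < (dist1 (x i) (x j))%:R)%R) ->
  partially_interactive C L x.
Proof.
move=> C0 An0 AnT H.
have c1 : (0 < #|A|)%N by rewrite card_gt0.
have c2 : (#|A| < N)%N.
  have := proper_card (A := A) (B := setT); rewrite cardsT card_ord properT; exact.
have c3 := cardsC A; rewrite card_ord in c3.
exists #|A|, #|~: A|; split.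
  split; [apply/andP; split; lia | apply/andP; split; lia | lia].
pose S1 := fun u => [exists i in A, ((dist1 u (x i))%:R <= L)%R].
pose S2 := fun u => [exists i in ~: A, ((dist1 u (x i))%:R <= L)%R].
have disj : forall u, ~~ (S1 u && S2 u).
  move=> u; apply/negP => /andP [/exists_inP [i iA hi] /exists_inP [j jA hj]].
  rewrite inE in jA.
  have := H i j iA jA.
  have := dist1_triR R _ (x i) u (x j); rewrite dist1C in hi.
  have : (0 < C%:R :> R)%R by rewrite ltr0n.
  lra.
exists S1, S2; split => //.
  move=> u v /exists_inP [i iA hi] /exists_inP [j jA hj].
  rewrite inE in jA.
  have := H i j iA jA.
  have := dist1_triR R _ (x i) u (x j); rewrite dist1C in hi.
  have := dist1_triR R _ u v (x j).
  move=> h1 h2 h3.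
  have : (C%:R < (dist1 u v)%:R :> R)%R by lra.
  by rewrite ltr_nat => /ltnW.
move=> z /cube_perm [p Hp].
have E1 : [set j | S1 (z j)] = p @^-1: A.
  apply/setP => j; rewrite !inE.
  case pA: (p j \in A).
    by apply/exists_inP; exists (p j).
  apply/negbTE/negP => h1; have := disj (z j); rewrite h1 /=.
  by apply/negP/negPn/exists_inP; exists (p j); rewrite // inE pA.
have E2 : [set j | S2 (z j)] = p @^-1: (~: A).
  apply/setP => j; rewrite !inE.
  case pA: (p j \in A); last first.
    by apply/exists_inP; exists (p j); rewrite // inE pA.
  apply/negbTE/negP => h1; have := disj (z j); rewrite h1 andbT.
  by apply/negP/negPn/exists_inP; exists (p j).
by rewrite E1 E2 !card_preimset //; apply: perm_inj.
Qed.

Lemma dist1_0 d (u : pt d) : dist1 u u = 0%N.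
Proof. by apply: big1 => k _; rewrite subrr. Qed.

Lemma card_lt_T N (A : {set 'I_N}) : A != setT -> (#|A| < N)%N.
Proof. move=> h; have := proper_card (A := A) (B := setT); rewrite cardsT card_ord properT; exact. Qed.

Lemma conn (R : realFieldType) N d (C : nat) (L : R) (x : cfg N d) :
  (0 < C)%N -> (0 <= L)%R -> ~ partially_interactive C L x ->
  forall i j, ((dist1 (x i) (x j))%:R <= (N.-1)%:R * (2 * L + C%:R))%R.
Proof.
move=> C0 L0 hx i.
set D := (2 * L + C%:R)%R.
have D0 : (0 <= D)%R by rewrite /D; have := ler0n R C; lra.
pose A k := [set j | ((dist1 (x i) (x j))%:R <= k%:R * D)%R].
have mono k : A k \subset A k.+1.
  apply/subsetP => j; rewrite !inE => h; apply: le_trans h _.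
  by apply: ler_wpM2r => //; rewrite ler_nat.
have claim : forall k, (k < N)%N -> (k < #|A k|)%N.
  elim=> [|k IH] hk.
    by rewrite card_gt0; apply/set0Pn; exists i; rewrite inE dist1_0 mul0r.
  have IH' := IH (ltnW hk).
  case: (eqVneq (A k) setT) => [AT|AnT].
    have : A k.+1 = setT.
      by apply/eqP; rewrite eqEsubset subsetT /= -AT mono.
    by move=> ->; rewrite cardsT card_ord.
  have An0 : A k != set0 by rewrite -card_gt0; lia.
  case: (boolP [exists i', exists j', [&& i' \in A k, j' \notin A k &
            ((dist1 (x i') (x j'))%:R <= D)%R]]) => [|hne]; last first.
    exfalso; apply: hx; apply: (@split_lemma R N d C L x (A k) C0 An0 AnT) => i' j' hi hj.
    rewrite ltNge; apply/negP => hle; move/negP: hne; apply.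
    by apply/existsP; exists i'; apply/existsP; exists j'; rewrite hi hj hle.
  move=> /existsP [i' /existsP [j' /and3P [hi hj hle]]].
  apply: (leq_ltn_trans IH'); apply: proper_card; apply/properP; split => //.
  exists j' => //; rewrite inE; move: hi; rewrite inE => hi.
  apply: le_trans (dist1_triR R _ _ (x i') _) _.
  have -> : (k.+1%:R * D = k%:R * D + D)%R by rewrite -nat1r; ring.
  exact: lerD.
move=> j; have := claim N.-1; rewrite prednK; last exact: leq_ltn_trans (leq0n i) (ltn_ord i).
move=> /(_ (leqnn _)) hc.
case: (eqVneq (A N.-1) setT) => [AT|AnT].
  by have := in_setT j; rewrite -AT inE.
by by move: (card_lt_T _ _ AnT); rewrite ltnNge hc.
Qed.

Theorem lemma3p5 (R : realFieldType) (d N : nat) (U : pt d -> R)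
  (s : seq (pt d)) (hd : (0 < d)%N) (hN : (0 < N)%N)
  (hs : forall u, (u \in s) = (U u != 0%R))
  (L : R) (x y : cfg N d)
  (hL : ((C_U s)%:R < L)%R)
  (hx : fully_interactive (C_U s) L x)
  (hy : fully_interactive (C_U s) L y)
  (hxy : ((8 * N)%:R * L <= (dS x y)%:R)%R) :
  forall u : pt d, ~ (Pi (cube L x) u /\ Pi (cube L y) u).
Proof.
move=> u [[z [hz [n hn]]] [w [hw [m hm]]]].
set C := C_U s in hL hx hy.
have C0 : (0 < C)%N by [].
have C0R : (0 <= C%:R :> R)%R by apply: ler0n.
have L0 : (0 <= L)%R by lra.
set D := (2 * L + C%:R)%R.
have cx := @conn R N d C L x C0 L0 hx.
have cy := @conn R N d C L y C0 L0 hy.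
have [p hp] := cube_perm _ _ _ _ _ _ hz.
have [q hq] := cube_perm _ _ _ _ _ _ hw.
have hpn := hp n; rewrite hn in hpn.
have hqm := hq m; rewrite hm in hqm.
set K := ((N.-1)%:R : R)%R.
have K0 : (0 <= K)%R by apply: ler0n.
have B : ((distinf x y)%:R <= 2 * L + 2 * K * D)%R.
  apply: bigmaxR; first by rewrite /D; nra.
  move=> j.
  have h1 := dist1_triR R _ (x j) (x (p n)) (y j).
  have h2 := dist1_triR R _ (x (p n)) u (y j).
  have h3 := dist1_triR R _ u (y (q m)) (y j).
  have h4 := cx j (p n).
  have h5 := cy (q m) j.
  rewrite dist1C in hpn.
  rewrite -/K -/D in h4 h5.
  lra.
have hdS := dS_le _ _ x y.
have : ((dS x y)%:R <= (distinf x y)%:R :> R)%R by rewrite ler_nat.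
have HN : (N%:R = K + 1 :> R)%R by rewrite /K -{1}(prednK hN) -addn1 natrD.
rewrite natrM HN in hxy.
have : (K * C%:R <= K * L)%R by apply: ler_wpM2l => //; apply: ltW.
rewrite /D in B.
nra.
Qed.
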